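(* Let $\varphi^{(0)}=a^{(0)}_kq^k+\sum_{j\ge k+1}a^{(0)}_jq^j$ and $\psi=b_0+b_1q+\sum_{j\ge2}b_jq^j$ be formal power series with integer coefficients, where $a^{(0)}_k\ge1$, $b_0,b_1\ge1$ and $b_j\ge0$ for all $j\ge2$. For $n\ge0$ let $\varphi^{(n)}=\varphi^{(0)}\psi^n=\sum_{j\ge k}a^{(n)}_jq^j$ and $$M_n=\max\{m\in\mathbb N: a^{(n)}_j>0\text{ for all }k\le j\le m\}.$$ Then the sequence $(M_n)_{n\ge0}$ is nondecreasing and unbounded. *)

(* Defs.v *)
From mathcomp Require Import all_boot all_order all_algebra.
Set Implicit Arguments. Unset Strict Implicit. Unset Printing Implicit Defensive.
Import Order.TTheory GRing.Theory Num.Theory.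
Local Open Scope ring_scope.

Definition fps := nat -> int.

Definition fps_mul (f g : fps) : fps :=
  fun j => \sum_(i < j.+1) f i * g (j - i)%N.

Definition fps_one : fps := fun j => if j == 0%N then 1 else 0.

Fixpoint fps_pow (f : fps) (n : nat) : fps :=
  match n with
  | 0 => fps_one
  | n'.+1 => fps_mul (fps_pow f n') f
  end.

Definition phin (phi0 psi : fps) (n : nat) : fps := fps_mul phi0 (fps_pow psi n).

(* "M_n >= m": all coefficients a^(n)_j with k <= j <= m are positive.
   M_n = sup { m | M_ge phi0 psi k n m } (possibly +infinity). *)
Definition M_ge (phi0 psi : fps) (k n m : nat) : Prop :=
  forall j : nat, (k <= j)%N -> (j <= m)%N -> 0 < phin phi0 psi n j.

(* Main.v *)
Require Import Defs.
From mathcomp Require Import all_boot all_order all_algebra.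
From mathcomp Require Import lra zify ring.
Import Order.TTheory GRing.Theory Num.Theory.
Local Open Scope ring_scope.

Definition Ptr (N : nat) (f : fps) : {poly int} := \poly_(i < N) f i.

Lemma fps_mulP N f g j : (j < N)%N -> fps_mul f g j = (Ptr N f * Ptr N g)`_j.
Proof.
move=> hj; rewrite coefM /fps_mul; apply: eq_bigr => i _.
rewrite /Ptr !coef_poly.
have hi : (i < N)%N by apply: leq_ltn_trans hj; rewrite -ltnS.
have hji : (j - i < N)%N by apply: leq_ltn_trans hj; exact: leq_subr.
by rewrite hi hji.
Qed.

Lemma coefM_eqr N (p X Y : {poly int}) j :
  (forall i, (i < N)%N -> X`_i = Y`_i) -> (j < N)%N -> (p * X)`_j = (p * Y)`_j.
Proof.
move=> hXY hj; rewrite !coefM; apply: eq_bigr => i _; rewrite hXY //.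
by apply: leq_ltn_trans hj; exact: leq_subr.
Qed.

Lemma fps_mulA f g h j : fps_mul f (fps_mul g h) j = fps_mul (fps_mul f g) h j.
Proof.
have hj : (j < j.+1)%N by [].
rewrite (fps_mulP _ _ _ _ hj) (fps_mulP _ _ _ _ hj).
rewrite (@coefM_eqr j.+1 _ _ (Ptr j.+1 g * Ptr j.+1 h)) //; last first.
  by move=> i hi; rewrite /Ptr coef_poly hi (fps_mulP _ _ _ _ hi).
rewrite mulrA [_ * Ptr j.+1 h]mulrC [in RHS]mulrC.
apply: (@coefM_eqr j.+1) => // i hi.
by rewrite /Ptr coef_poly hi (fps_mulP _ _ _ _ hi).
Qed.

Lemma phinS phi0 psi n j : phin phi0 psi n.+1 j = fps_mul (phin phi0 psi n) psi j.
Proof. by rewrite /phin /= fps_mulA. Qed.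

Lemma phin0 phi0 psi j : phin phi0 psi 0 j = phi0 j.
Proof.
rewrite /phin /= /fps_mul big_ord_recr /= subnn /fps_one /= mulr1 big1 ?add0r //.
move=> i _; have : (j - i != 0)%N by rewrite subn_eq0 -ltnNge ltn_ord.
by move/negbTE => ->; rewrite mulr0.
Qed.

Lemma phin_low phi0 psi k n j : (forall j, (j < k)%N -> phi0 j = 0) ->
  (j < k)%N -> phin phi0 psi n j = 0.
Proof.
move=> hlow hj; rewrite /phin /fps_mul big1 // => i _.
rewrite hlow ?mul0r //; apply: leq_ltn_trans hj; rewrite -ltnS; exact: ltn_ord.
Qed.

Lemma mul_ge1 a psi j : (forall i, 0 <= psi i) -> (forall i, (i < j)%N -> 0 <= a i) ->
  a j * psi 0%N <= fps_mul a psi j.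
Proof.
move=> hp ha; rewrite /fps_mul big_ord_recr /= subnn lerDr.
by apply: sumr_ge0 => i _; apply: mulr_ge0 => //; apply: ha.
Qed.

Lemma mul_ge2 a psi m : (forall i, 0 <= psi i) -> (forall i, (i < m.+1)%N -> 0 <= a i) ->
  a m.+1 * psi 0%N + a m * psi 1%N <= fps_mul a psi m.+1.
Proof.
move=> hp ha; rewrite /fps_mul big_ord_recr big_ord_recr /= subnn.
have -> : (m.+1 - m = 1)%N by rewrite subSn // subnn.
have hs : 0 <= \sum_(i < m) a i * psi (m.+1 - i)%N.
  apply: sumr_ge0 => i _; apply: mulr_ge0 => //; apply: ha.
  by apply: ltn_trans (ltn_ord i) _.
lra.
Qed.

Theorem lemma7p2 (k : nat) (phi0 psi : fps)
  (hlow : forall j : nat, (j < k)%N -> phi0 j = 0)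
  (hak : 1 <= phi0 k)
  (hb0 : 1 <= psi 0%N) (hb1 : 1 <= psi 1%N)
  (hbj : forall j : nat, (2 <= j)%N -> 0 <= psi j) :
  (* (M_n) nondecreasing: M_n <= M_{n+1} *)
  (forall n m : nat, M_ge phi0 psi k n m -> M_ge phi0 psi k n.+1 m) /\
  (* (M_n) unbounded *)
  (forall N : nat, exists n : nat, M_ge phi0 psi k n N).
Proof.
set a := phin phi0 psi.
have hp : forall i, 0 <= psi i.
  case=> [|[|i]]; [lra|lra|exact: hbj].
have nonneg : forall n m, M_ge phi0 psi k n m -> forall i, (i <= m)%N -> 0 <= a n i.
  move=> n m hM i him; case: (ltnP i k) => hik.
    by rewrite /a (phin_low _ _ _ _ _ hlow hik).
  by apply: ltW; apply: hM.
have mono : forall n m, M_ge phi0 psi k n m -> M_ge phi0 psi k n.+1 m.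
  move=> n m hM j hkj hjm; rewrite phinS.
  have hnn : forall i, (i < j)%N -> 0 <= a n i.
    move=> i hij; apply: (nonneg n m hM); apply: leq_trans hjm; exact: ltnW.
  have h1 := mul_ge1 (a n) psi j hp hnn.
  have h2 : 0 < a n j by apply: hM.
  change (0 < fps_mul (a n) psi j); nra.
split => //.
have monoT : forall n m t, M_ge phi0 psi k n m -> M_ge phi0 psi k (n + t) m.
  move=> n m; elim=> [|t IH] hM; first by rewrite addn0.
  by rewrite addnS; apply: mono; apply: IH.
have base : forall m, (m <= k)%N -> M_ge phi0 psi k 0 m.
  move=> m hm j hkj hjm; have -> : j = k by apply/eqP; rewrite eqn_leq hkj (leq_trans hjm hm).
  rewrite /a phin0; lra.
elim=> [|N [n0 hM]]; first by exists 0%N; apply: base.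
case: (ltnP N k) => hNk; first by exists 0%N; apply: base.
set b0 := psi 0%N; set b1 := psi 1%N.
set A := a n0 N.+1; set B := a n0 N.
have hB1 : 1 <= B by exact: (hM N hNk (leqnn N)).
have hBt : forall t, b0 ^+ t * B <= a (n0 + t)%N N.
  elim=> [|t IH]; first by rewrite expr0 mul1r addn0.
  have hM' := monoT n0 N t hM.
  have hnn : forall i, (i < N)%N -> 0 <= a (n0 + t)%N i.
    by move=> i hi; apply: (nonneg _ _ hM'); exact: ltnW.
  have h1 := mul_ge1 (a (n0 + t)%N) psi N hp hnn.
  have h2 : 0 <= a (n0 + t)%N N by apply: (nonneg _ _ hM').
  have hpow : 0 <= b0 ^+ t by apply: exprn_ge0; rewrite /b0; lra.
  rewrite addnS exprS.
  have -> : a (n0 + t).+1 N = fps_mul (a (n0 + t)%N) psi N by exact: phinS.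
  rewrite -/b0 in h1.
  have h3 : b0 ^+ t * B * b0 <= a (n0 + t)%N N * b0 by apply: ler_wpM2r; [rewrite /b0; lra | exact: IH].
  have -> : b0 * b0 ^+ t * B = b0 ^+ t * B * b0 by ring.
  lra.
have hAt : forall t, b0 ^+ t * (b0 * A + t%:R * b1 * B) <= b0 * a (n0 + t)%N N.+1.
  elim=> [|t IH]; first by rewrite expr0 mul1r addn0 mul0r mul0r addr0.
  have hM' := monoT n0 N t hM.
  have hnn : forall i, (i < N.+1)%N -> 0 <= a (n0 + t)%N i.
    by move=> i hi; apply: (nonneg _ _ hM').
  have h1 := mul_ge2 (a (n0 + t)%N) psi N hp hnn.
  have h2 := hBt t.
  have hpow : 0 <= b0 ^+ t by apply: exprn_ge0; rewrite /b0; lra.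
  rewrite addnS exprS.
  have -> : a (n0 + t).+1 N.+1 = fps_mul (a (n0 + t)%N) psi N.+1 by exact: phinS.
  rewrite -/b0 -/b1 in h1.
  rewrite -natr1.
  set P := b0 ^+ t in IH h2 hpow *.
  set X := a (n0 + t)%N N.+1 in IH h1 *.
  set Y := a (n0 + t)%N N in h1 h2 *.
  set Z := fps_mul _ psi N.+1 in h1 *.
  have hb0' : 1 <= b0 by [].
  have hb1' : 1 <= b1 by [].
  have e1 : b0 * (b0 * X + Y * b1) <= b0 * Z by rewrite ler_pM2l; lra.
  have e2 : b0 * (P * (b0 * A + t%:R * b1 * B)) <= b0 * (b0 * X).
    by rewrite ler_pM2l; [exact: IH| lra].
  have e3 : b0 * b1 * (P * B) <= b0 * b1 * Y.
    by rewrite ler_pM2l; [exact: h2| nra].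
  nra.
pose t := (absz (b0 * A)).+1.
exists (n0 + t)%N.
have hpos : 0 < a (n0 + t)%N N.+1.
  have h := hAt t.
  have ht : t%:R = (`|b0 * A| + 1 : int) by rewrite /t -natr1 natz abszE.
  have habs : - `|b0 * A| <= b0 * A by rewrite lerNl -normrN ler_norm.
  have hpow : 0 < b0 ^+ t by apply: exprn_gt0; rewrite /b0; lra.
  have hq : 0 < b0 * A + t%:R * b1 * B.
    rewrite ht; have : 1 <= b1 * B by have hb1x : 1 <= b1 by []; nra.
    have : 0 <= `|b0 * A| by exact: normr_ge0.
    nra.
  have : 0 < b0 * a (n0 + t)%N N.+1 by apply: lt_le_trans h; exact: mulr_gt0.
  by rewrite pmulr_rgt0 // /b0; lra.
move=> j hkj; rewrite leq_eqVlt => /orP [/eqP -> //| hj].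
by apply: (monoT n0 N t hM).
Qed.
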